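(* Let $\|\cdot\|$ be a norm on $\mathbb{R}^K$. For every $\mathbf{w} = (\mathbf{w}_1,\mathbf{w}_2) \in \mathbb{R}^K\times\mathbb{R}^K$, \[ \min_{\boldsymbol{\alpha}\in\Delta(K)}\max_{\mathbf{l}\in[0,1]^K} \langle \mathbf{w}, (\boldsymbol{\alpha}\odot\mathbf{l},\mathbf{l})\rangle \le h_S(\mathbf{w}). \] That is, the Blackwell condition holds for the game with payoff $r(\boldsymbol{\alpha},\mathbf{l}) = (\boldsymbol{\alpha}\odot\mathbf{l},\mathbf{l})$ and target set $S$.
   Context: $\Delta(K) = \{\boldsymbol{\alpha}\in[0,1]^K : \sum_i\alpha_i = 1\}$; $\boldsymbol{\alpha}\odot\mathbf{l} = (\alpha_1 l_1,\dots,\alpha_K l_K)$; $C^*(\mathbf{l}) = \min_{\boldsymbol{\alpha}\in\Delta(K)}\|\boldsymbol{\alpha}\odot\mathbf{l}\|$; $S = \{(\mathbf{x},\mathbf{y})\in[0,1]^K\times[0,1]^K : \|\mathbf{x}\|\le C^*(\mathbf{y})\}$; $h_S(\mathbf{w}) = \sup_{\mathbf{s}\in S}\langle\mathbf{s},\mathbf{w}\rangle$ with inner product $\langle(\mathbf{a},\mathbf{b}),(\mathbf{c},\mathbf{d})\rangle = \langle\mathbf{a},\mathbf{c}\rangle+\langle\mathbf{b},\mathbf{d}\rangle$ on $\mathbb{R}^K\times\mathbb{R}^K$. *)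

(* Defs.v *)
From HB Require Import structures.
From mathcomp Require Import all_boot all_order all_algebra.
From mathcomp Require Import boolp classical_sets reals.
Set Implicit Arguments. Unset Strict Implicit. Unset Printing Implicit Defensive.
Import Order.TTheory GRing.Theory Num.Theory.
Local Open Scope classical_set_scope.
Local Open Scope ring_scope.

Section Defs.
Variables (R : realType) (K : nat).

Definition vecK := 'I_K -> R.

Definition is_norm (N : vecK -> R) : Prop :=
  [/\ forall x : vecK, N x = 0 -> x = (fun _ => 0),
      forall (a : R) (x : vecK), N (fun i => a * x i) = `|a| * N x
    & forall x y : vecK, N (fun i => x i + y i) <= N x + N y].

Definition inprod (a c : vecK) : R := \sum_(i < K) a i * c i.

Definition inprod2 (u v : vecK * vecK) : R := inprod u.1 v.1 + inprod u.2 v.2.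

Definition cube : set vecK := [set l | forall i, 0 <= l i <= 1].

Definition simplex : set vecK :=
  [set a | (forall i, 0 <= a i <= 1) /\ \sum_(i < K) a i = 1].

Definition hadamard (a l : vecK) : vecK := fun i => a i * l i.

(* C*(l) = min_{alpha in Delta(K)} ||alpha (.) l|| (attained; written as inf) *)
Definition Cstar (N : vecK -> R) (l : vecK) : R :=
  inf [set N (hadamard a l) | a in simplex].

Definition Sset (N : vecK -> R) : set (vecK * vecK) :=
  [set s | cube s.1 /\ cube s.2 /\ N s.1 <= Cstar N s.2].

Definition hS (N : vecK -> R) (w : vecK * vecK) : R :=
  sup [set inprod2 s w | s in Sset N].

Definition payoff (a l : vecK) : vecK * vecK := (hadamard a l, l).

End Defs.

(* Main.v *)
Require Import Defs.
From HB Require Import structures.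
From mathcomp Require Import all_boot all_order all_algebra.
From mathcomp Require Import boolp classical_sets reals.
From mathcomp Require Import all_classical all_reals all_analysis.
From mathcomp Require Import lra ring.
Import Order.TTheory GRing.Theory Num.Theory.
Import numFieldNormedType.Exports.
Local Open Scope classical_set_scope.
Local Open Scope ring_scope.

Section T.
Variable R : realType.

Lemma coord_le n (u : 'rV[R]_n) i : `|u ord0 i| <= `|u|.
Proof.
change (`|u|) with (mx_norm u); rewrite mx_normrE.
by apply/bigmax_geP; right; exists (ord0, i).
Qed.

Lemma lip_cont n (g : 'rV[R]_n -> R) (M : R) : 0 < M ->
  (forall u v, `|g u - g v| <= M * `|u - v|) -> continuous g.
Proof.
move=> M0 Hg x; apply: (proj2 (@cvgrPdist_lt _ _ _ (nbhs x) (nbhs_filter x) g (g x))) => e e0.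
near=> y.
apply: le_lt_trans (Hg _ _) _.
rewrite -ltr_pdivlMl // mulrC.
near: y.
have : e / M > 0 by rewrite divr_gt0.
move=> H; exact: (@cvgr_dist_lt _ _ _ (nbhs x) (nbhs_filter x) id x cvg_id _ H).
Unshelve. all: by end_near.
Qed.

Lemma sum_cont n : continuous (fun u : 'rV[R]_n => \sum_i u ord0 i).
Proof.
apply: (@lip_cont _ _ (n%:R + 1)); first by rewrite ltr_wpDl.
move=> u v; rewrite -sumrB; apply: le_trans; first exact: ler_norm_sum.
apply: (@le_trans _ _ (\sum_(i < n) `|u - v|)%R).
  apply: ler_sum => i _; have := @coord_le _ (u - v) i; by rewrite !mxE.
rewrite sumr_const card_ord -[leLHS]mulr_natr mulrC.
by apply: ler_wpM2r => //; rewrite lerDl.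
Qed.

Definition srV n : set 'rV[R]_n :=
  [set v | (forall i, 0 <= v ord0 i <= 1) /\ \sum_i v ord0 i = 1].

Lemma srV_compact n : compact (srV n).
Proof.
have B : compact [set v : 'rV[R]_n | forall i, v ord0 i \in `[0, 1]].
  exact: (@rV_compact R n (fun=> `[0,1]%classic) (fun=> @segment_compact R 0 1)).
have C : closed (srV n).
  have -> : srV n = [set v : 'rV[R]_n | forall i, v ord0 i \in `[0, 1]]
      `&` ((fun u : 'rV[R]_n => \sum_i u ord0 i) @^-1` [set x | x = 1]).
    apply/seteqP; split => v /=.
      by move=> [H1 H2]; split => // i; rewrite in_itv /= H1.
    by move=> [H1 H2]; split => // i; have := H1 i; rewrite in_itv.
  apply: closedI; first exact: compact_closed.
  apply: preimage_closed; last exact: closed_eq.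
  by move=> x _; apply: sum_cont.
apply: (subclosed_compact C B).
by move=> v [H _] i; rewrite in_itv /= H.
Qed.
End T.

Section Main.
Variables (R : realType) (K : nat).

Definition ev (j : 'I_K) : vecK R K := fun i => ((i == j)%:R : R).

Lemma sum_ind (j : 'I_K) : \sum_(i < K) ev j i = 1.
Proof.
rewrite (bigD1 j) //= /ev eqxx big1 ?addr0 // => k /negbTE ->; by [].
Qed.

Lemma simplex_ev j : @simplex R K (ev j).
Proof.
split; last exact: sum_ind.
by move=> i; rewrite /ev; case: (i == j); rewrite /= ?lexx ?ler01.
Qed.

Lemma inprod_ub (c x : vecK R K) : (forall i, `|x i| <= 1) ->
  inprod c x <= \sum_i `|c i|.
Proof.
move=> H; rewrite /inprod; apply: ler_sum => i _.
apply: le_trans (ler_norm _) _; rewrite normrM.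
by rewrite -[leRHS]mulr1; apply: ler_wpM2l.
Qed.

Lemma inprod_ub' (c x : vecK R K) : (forall i, `|x i| <= 1) ->
  inprod x c <= \sum_i `|c i|.
Proof.
move=> H; rewrite /inprod; apply: ler_sum => i _.
apply: le_trans (ler_norm _) _; rewrite normrM mulrC.
by rewrite -[leRHS]mulr1; apply: ler_wpM2l.
Qed.

Lemma cube_norm (x : vecK R K) : @cube R K x -> forall i, `|x i| <= 1.
Proof. by move=> H i; have /andP[h1 h2] := H i; rewrite ger0_norm. Qed.

Variables (N : vecK R K -> R) (hN : is_norm N).

Lemma N0 : N (fun _ => 0) = 0.
Proof.
case: hN => _ hZ _.
have E : (fun _ : 'I_K => (0:R)) = (fun i => 0 * (fun _ : 'I_K => (0:R)) i).
  by apply: funext => i; rewrite mul0r.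
by rewrite E hZ normr0 mul0r.
Qed.

Lemma Nge0 x : 0 <= N x.
Proof.
case: hN => _ hZ hT.
have := hT x (fun i => -1 * x i).
rewrite hZ normrN normr1 mul1r.
have -> : (fun i => x i + -1 * x i) = (fun _ => 0).
  by apply: funext => i; rewrite mulN1r subrr.
rewrite N0; lra.
Qed.

Lemma Nlip x y : N x - N y <= N (fun i => x i - y i).
Proof.
case: hN => _ hZ hT.
have := hT y (fun i => x i - y i).
have -> : (fun i => y i + (x i - y i)) = x.
  by apply: funext => i; rewrite addrC subrK.
lra.
Qed.

Lemma Nsum (s : seq 'I_K) (F : 'I_K -> vecK R K) :
  N (fun i => \sum_(j <- s) F j i) <= \sum_(j <- s) N (F j).
Proof.
case: hN => _ hZ hT.
elim: s => [|j s IH].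
  have -> : (fun i => \sum_(j <- [::]) F j i) = (fun _ => 0).
    by apply: funext => i; rewrite big_nil.
  by rewrite N0 big_nil.
have -> : (fun i => \sum_(k <- j :: s) F k i)
    = (fun i => F j i + (fun i => \sum_(k <- s) F k i) i).
  by apply: funext => i; rewrite big_cons.
apply: le_trans (hT _ _) _.
by rewrite big_cons lerD2l.
Qed.

Lemma Nbound x : N x <= \sum_(j < K) `|x j| * N (ev j).
Proof.
case: hN => _ hZ hT.
have E : x = (fun i => \sum_(j <- index_enum 'I_K) (fun i => x j * ev j i) i).
  apply: funext => i /=; rewrite (bigD1 i) //= /ev eqxx mulr1 big1 ?addr0 //.
  by move=> k; rewrite eq_sym => /negbTE ->; rewrite mulr0.
rewrite {1}E; apply: le_trans (Nsum _ _) _.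
by apply: ler_sum => j _; rewrite hZ.
Qed.

Lemma Nlip_rV (l : vecK R K) (u v : 'rV[R]_K) : @cube R K l ->
  N (hadamard (fun i => u ord0 i) l) - N (hadamard (fun i => v ord0 i) l)
  <= `|u - v| * \sum_(j < K) N (ev j).
Proof.
move=> hl; apply: le_trans (Nlip _ _) _.
apply: le_trans (Nbound _) _.
rewrite mulr_sumr; apply: ler_sum => j _.
apply: ler_wpM2r; first exact: Nge0.
rewrite /hadamard -mulrBl normrM.
have := @coord_le R K (u - v) j; rewrite !mxE => h.
have h2 := @cube_norm l hl j.
rewrite -[leRHS]mulr1; apply: ler_pM => //.
Qed.

Lemma attain (hK : (0 < K)%N) (l : vecK R K) : @cube R K l ->
  exists2 bb, @simplex R K bb &
    forall b', @simplex R K b' -> N (hadamard bb l) <= N (hadamard b' l).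
Proof.
move=> hl.
pose F (v : 'rV[R]_K) := N (hadamard (fun i => v ord0 i) l).
have cF : continuous F.
  apply: (@lip_cont R K F (\sum_(j < K) N (ev j) + 1)).
    by apply: ltr_wpDl => //; apply: sumr_ge0 => j _; exact: Nge0.
  move=> u v; rewrite ler_norml.
  have h1 := Nlip_rV l u v hl; have h2 := Nlip_rV l v u hl.
  rewrite distrC in h2.
  have h3 : 0 <= `|u - v| by [].
  rewrite /F; apply/andP; split; nra.
have ne : srV R K !=set0.
  exists (\row_i ev (Ordinal hK) i); split.
    by move=> i; rewrite mxE; have [] := simplex_ev (Ordinal hK); move=> H _; exact: H.
  rewrite -(sum_ind (Ordinal hK)); apply: eq_bigr => i _; by rewrite mxE.
have [c cS cmin] := EVT_min_rV ne (srV_compact R K) (continuous_subspaceT cF).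
rewrite inE in cS.
exists (fun i => c ord0 i); first exact: cS.
move=> b' hb'.
have := cmin (\row_i b' i).
rewrite /F /=.
have -> : [eta (\row_i b' i) ord0] = b' by apply: funext => i; rewrite mxE.
apply; rewrite inE; case: hb' => H1 H2; split.
  by move=> i; rewrite mxE.
by rewrite -H2; apply: eq_bigr => i _; rewrite mxE.
Qed.

Lemma Cstar_ge0 (hK : (0 < K)%N) y : 0 <= Cstar N y.
Proof.
apply: lb_le_inf.
  by exists (N (hadamard (ev (Ordinal hK)) y)); exists (ev (Ordinal hK)) => //; exact: simplex_ev.
by move=> z [a _ <-]; exact: Nge0.
Qed.

End Main.

Lemma argmin_ex (R : realType) (K : nat) (hK : (0 < K)%N) (a : 'I_K -> R) :
  exists j, forall i, a j <= a i.
Proof.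
case: (@arg_minP _ _ _ (Ordinal hK) xpredT a isT) => j _ H.
by exists j => i; apply: H.
Qed.

Arguments inprod_ub {R K c x}. Arguments inprod_ub' {R K c x}. Arguments cube_norm {R K x}.
Arguments Nge0 {R K N}. Arguments attain {R K N}. Arguments Cstar_ge0 {R K N}.
Arguments simplex_ev {R K}. Arguments ev {R K}. Arguments N0 {R K N}. Arguments sum_ind {R K}.

Theorem lemma1 (R : realType) (K : nat) (hK : (0 < K)%N)
  (N : vecK R K -> R) (hN : is_norm N) (w : vecK R K * vecK R K) :
  inf [set sup [set inprod2 w (payoff a l) | l in @cube R K] | a in @simplex R K]
  <= hS N w.
Proof.
set a := w.1. set b := w.2.
pose f al l := inprod2 w (payoff al l).
have fE : forall al l, f al l = \sum_i (al i * a i + b i) * l i.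
  move=> al l; rewrite /f /inprod2 /payoff /inprod /hadamard /= -big_split /=.
  by apply: eq_bigr => i _; rewrite /a /b; ring.
have zin : @cube R K (fun _ => 0) by move=> i; rewrite lexx ler01.
have Bnd : forall al l, @simplex R K al -> @cube R K l ->
    f al l <= \sum_i `|a i| + \sum_i `|b i|.
  move=> al l [hal _] hl; rewrite /f /inprod2 /payoff /=.
  apply: lerD; last exact: inprod_ub (cube_norm hl).
  apply: inprod_ub => i; rewrite /hadamard normrM.
  have /andP[h1 h2] := hal i; have /andP[h3 h4] := hl i.
  rewrite !ger0_norm //; exact: mulr_ile1.
have ubS : has_ubound [set inprod2 s w | s in Sset N].
  exists (\sum_i `|a i| + \sum_i `|b i|) => z [s [h1 [h2 _]] <-].
  by rewrite /inprod2; apply: lerD; apply: inprod_ub'; apply: cube_norm.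
have ubI : forall al, @simplex R K al -> has_ubound [set f al l | l in @cube R K].
  by move=> al hal; exists (\sum_i `|a i| + \sum_i `|b i|) => z [l hl <-]; apply: Bnd.
have f0 : forall al, f al (fun _ => 0) = 0.
  by move=> al; rewrite fE big1 // => i _; rewrite mulr0.
have key : exists2 al, @simplex R K al &
    exists2 s, Sset N s & forall l, @cube R K l -> f al l <= inprod2 s w.
  pose p i := if 0 <= b i then b i else 0.
  have p0 : forall i, 0 <= p i by move=> i; rewrite /p; case: ifP.
  have pb : forall i, b i <= p i.
    by move=> i; rewrite /p; case: ifP => // /negbT; rewrite -ltNge => /ltW.
  have AB : forall al, @simplex R K al -> (forall i, al i * a i + b i <= p i) ->
      exists2 al, @simplex R K al &
      exists2 s, Sset N s & forall l, @cube R K l -> f al l <= inprod2 s w.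
    move=> al hal hp; exists al => //.
    exists ((fun _ => 0), (fun i => if 0 <= b i then 1 else 0)).
      split; first exact: zin.
      split.
        by move=> i /=; case: ifP; rewrite ?lexx ?ler01.
      by rewrite /= (N0 hN); exact: Cstar_ge0.
    move=> l hl; rewrite fE /inprod2 /inprod /= [X in _ <= X + _]big1 ?add0r; last first.
      by move=> i _; rewrite mul0r.
    apply: ler_sum => i _.
    have h3 := hp i; have h4 := p0 i; have /andP[h1 h2] := hl i.
    have -> : (if 0 <= b i then 1 else 0) * w.2 i = p i.
      by rewrite /p -/b; case: ifP => _; ring.
    nra.
  have [[j hj]|hneg] := pselect (exists j, a j <= 0).
    apply: (AB (ev j)); first exact: simplex_ev.
    move=> i; rewrite /ev /=; have [->|_] := eqVneq i j; rewrite ?eqxx /= ?mul1r ?mul0r.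
      by have := pb j; lra.
    rewrite add0r; exact: pb.
  have hpos : forall i, 0 < a i.
    by move=> i; rewrite ltNge; apply/negP => h; apply: hneg; exists i.
  have an0 : forall i, a i != 0 by move=> i; rewrite gt_eqF.
  pose v i := if 0 <= b i then 0 else - b i / a i.
  have v0 : forall i, 0 <= v i.
    move=> i; rewrite /v; case: ifP => // /negbT; rewrite -ltNge => h.
    by apply: divr_ge0; [lra | exact: ltW].
  have vE : forall i, v i * a i + b i = p i.
    move=> i; rewrite /v /p; case: ifP => _; first by ring.
    by rewrite divfK // addNr.
  pose S := \sum_i v i.
  have vS : forall i, v i <= S.
    move=> i; rewrite /S (bigD1 i) //= lerDl; apply: sumr_ge0 => k _; exact: v0.
  have [S1|S1] := lerP 1 S.
    have S0 : 0 < S by lra.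
    apply: (AB (fun i => v i / S)).
      split.
        move=> i; apply/andP; split; first by apply: divr_ge0; [exact: v0 | lra].
        by rewrite ler_pdivrMr // mul1r.
      by rewrite -mulr_suml -/S divff // gt_eqF.
    move=> i; rewrite -(vE i) lerD2r; apply: ler_wpM2r; first exact: ltW.
    rewrite ler_pdivrMr //; have := v0 i; nra.
  have [j hj] := @argmin_ex R K hK a.
  pose al i := v i + ev j i * (1 - S).
  pose y i := if 0 <= b i then 1 else a j / a i.
  have ycube : @cube R K y.
    move=> i; rewrite /y; case: ifP => _; first by rewrite ler01 lexx.
    apply/andP; split; first by apply: divr_ge0; apply: ltW.
    by rewrite ler_pdivrMr // mul1r.
  have [bb hbb bmin] := attain hN hK y ycube.
  exists al.
    split.
      move=> i; rewrite /al /ev /=; have [->|_] := eqVneq i j;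
        rewrite ?eqxx /= ?mul1r ?mul0r ?addr0.
        by have h1 := v0 j; have h2 := vS j; apply/andP; split; lra.
      by have h1 := v0 i; have h2 := vS i; apply/andP; split; lra.
    rewrite big_split /= -mulr_suml sum_ind -/S; ring.
  exists (hadamard bb y, y).
    split; last split => //.
      move=> i; rewrite /hadamard; case: hbb => hb _.
      have /andP[h1 h2] := hb i; have /andP[h3 h4] := ycube i.
      by apply/andP; split; [apply: mulr_ge0 | apply: mulr_ile1].
    apply: lb_le_inf; first by exists (N (hadamard bb y)); exists bb.
    by move=> z [b' hb' <-]; exact: bmin.
  move=> l hl.
  have cE : forall i, al i * a i + b i = p i + ev j i * ((1 - S) * a j).
    move=> i; rewrite -(vE i) /al /ev /=; have [->|_] := eqVneq i j;
      rewrite ?eqxx /=; ring.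
  have c0 : forall i, 0 <= al i * a i + b i.
    move=> i; rewrite cE; apply: addr_ge0 => //; rewrite /ev.
    by case: (i == j); rewrite /= ?mul0r // mul1r; apply: mulr_ge0; [lra | exact: ltW].
  apply: (@le_trans _ _ (\sum_i (al i * a i + b i))).
    rewrite fE; apply: ler_sum => i _; have /andP[h1 h2] := hl i.
    have := c0 i; nra.
  have L1 : \sum_i (al i * a i + b i) = \sum_i p i + (1 - S) * a j.
    under eq_bigr do rewrite cE.
    by rewrite big_split /= -mulr_suml sum_ind mul1r.
  have L2 : \sum_i y i * b i = \sum_i p i - a j * S.
    rewrite /S mulr_sumr -sumrB; apply: eq_bigr => i _.
    rewrite /y /v /p; case: ifP => _; first by ring.
    by field.
  have L3 : a j <= \sum_i bb i * y i * a i.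
    case: hbb => hb hs.
    rewrite -[leLHS]mul1r -hs mulr_suml; apply: ler_sum => i _.
    rewrite -mulrA; apply: ler_wpM2l; first by have /andP[] := hb i.
    rewrite /y; case: ifP => _; first by rewrite mul1r.
    by rewrite divfK.
  rewrite L1 /inprod2 /inprod /= /hadamard.
  have -> : \sum_i y i * w.2 i = \sum_i y i * b i by [].
  have -> : \sum_i bb i * y i * w.1 i = \sum_i bb i * y i * a i by [].
  rewrite L2; lra.
case: key => al hal [s hs hsl].
apply: (@le_trans _ _ (sup [set f al l | l in @cube R K])).
  apply: ge_inf; last by exists al.
  exists 0 => z [al' hal' <-].
  apply: ub_le_sup; first exact: ubI.
  by exists (fun _ => 0) => //; apply: f0.
apply: ge_sup; first by exists (f al (fun _ => 0)); exists (fun _ => 0).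
move=> z [l hl <-]; apply: le_trans (hsl l hl) _.
by apply: ub_le_sup => //; exists s.
Qed.
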